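(* There does not exist any GRLOWJFA that accepts the language $\{a^nb^n : n\ge 0\}$.
   Context: ''Subword'' means a contiguous factor. A GRLOWJFA is a tuple $\mathcal{A}=(\Sigma,Q,q_0,F,R)$ with $\Sigma$ a finite alphabet, $Q$ a finite state set, $q_0\in Q$, $F\subseteq Q$, and $R\subset Q\times\Sigma^+\times Q$ a finite set of rules such that for each $p\in Q$, $w\in\Sigma^+$ at most one $q$ has $(p,w,q)\in R$ (meaning: go from $p$ to $q$ deleting $w$). $\Sigma_p=\{w:(p,w,q)\in R\text{ for some }q\}$. Configurations lie in $\Sigma^*Q\Sigma^*$. Moves $\curvearrowright$: (1) for $t,u,v\in\Sigma^*$ and $(p,x,q)\in R$: $tpuxv\curvearrowright tuqv$ provided $u$ contains no word of $\Sigma_p$ as a subword and there are no $u_1,x_2\in\Sigma^*$, $u_2,x_1\in\Sigma^+$ with $u=u_1u_2$, $x=x_1x_2$, $u_2x_1=x$; (2) for $x\in\Sigma^+$, $y\in\Sigma^*$ with $y$ containing no word of $\Sigma_p$ as a subword: $xpy\curvearrowright pxy$. The accepted language is $L_{GRL}(\mathcal{A})=\{w\in\Sigma^*: q_0w\curvearrowright^* q_f \text{ for some } q_f\in F\}$. *)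

(* Defs.v *)
From mathcomp Require Import all_boot.
Set Implicit Arguments. Unset Strict Implicit. Unset Printing Implicit Defensive.

Record GRLOWJFA (Sigma : finType) := {
  state : finType;
  q0 : state;
  final : pred state;
  rules : seq (state * seq Sigma * state);
  rules_nonempty : forall p w q, (p, w, q) \in rules -> w != [::];
  rules_det : forall p w q q', (p, w, q) \in rules -> (p, w, q') \in rules -> q = q'
}.

Section Moves.
Variables (Sigma : finType) (A : GRLOWJFA Sigma).

Definition in_Sigma_p (p : state A) (w : seq Sigma) : Prop :=
  exists q, (p, w, q) \in @rules Sigma A.

Definition no_Sigma_p_subword (p : state A) (u : seq Sigma) : Prop :=
  forall w, in_Sigma_p p w -> ~~ infix w u.

(* configuration t p y  in  Sigma^* Q Sigma^*  represented as (t, p, y) *)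
Definition config := (seq Sigma * state A * seq Sigma)%type.

Inductive move : config -> config -> Prop :=
| move_delete (t u v x : seq Sigma) (p q : state A) :
    (p, x, q) \in @rules Sigma A ->
    no_Sigma_p_subword p u ->
    ~ (exists u1 u2 x1 x2 : seq Sigma,
          u2 != [::] /\ x1 != [::] /\ u = u1 ++ u2 /\ x = x1 ++ x2 /\ u2 ++ x1 = x) ->
    move (t, p, u ++ x ++ v) (t ++ u, q, v)
| move_jump (x y : seq Sigma) (p : state A) :
    x != [::] ->
    no_Sigma_p_subword p y ->
    move (x, p, y) ([::], p, x ++ y).

Inductive moves : config -> config -> Prop :=
| moves_refl c : moves c c
| moves_step c1 c2 c3 : move c1 c2 -> moves c2 c3 -> moves c1 c3.

Definition accepts (w : seq Sigma) : Prop :=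
  exists qf, @final Sigma A qf /\ moves ([::], @q0 Sigma A, w) ([::], qf, [::]).

End Moves.

(* Main.v *)
Require Import Defs.
From mathcomp Require Import all_boot.
From mathcomp Require Import zify.

Set Implicit Arguments. Unset Strict Implicit. Unset Printing Implicit Defensive.

Section Aux.
Variables (Sigma : finType) (A : GRLOWJFA Sigma).

Inductive PR : state A -> seq Sigma -> state A -> Prop :=
| PR_nil p : PR p [::] p
| PR_cons p (x : seq Sigma) p' z q : (p, x, p') \in rules A -> PR p' z q -> PR p (x ++ z) q.

Lemma PR_cat p X s Y q : PR p X s -> PR s Y q -> PR p (X ++ Y) q.
Proof.
elim=> [//|p0 x p' z q' Hr _ IH] HY.
rewrite -catA; exact: PR_cons Hr (IH HY).
Qed.

Lemma PR_moves p D q : PR p D q -> forall y, @moves _ A ([::], p, D ++ y) ([::], q, y).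
Proof.
elim=> [p0 y|p0 x p' z q' Hr _ IH y]; first exact: moves_refl.
rewrite -catA; apply: moves_step; last exact: IH.
apply: (@move_delete Sigma A [::] [::] (z ++ y) x p0 p' Hr).
- move=> w [q1 Hw]; have := rules_nonempty Hw; by case: w {Hw}.
- move=> [u1 [u2 [x1 [x2 [Hu2 [_ [Hu _]]]]]]].
  have : size ([::] : seq Sigma) = size (u1 ++ u2) by rewrite Hu.
  rewrite size_cat; move: Hu2; case: u2 {Hu} => //= c l _; lia.
Qed.

Lemma moves_D c1 c2 : @moves _ A c1 c2 ->
  exists D, PR c1.1.2 D c2.1.2 /\ perm_eq (D ++ c2.1.1 ++ c2.2) (c1.1.1 ++ c1.2).
Proof.
elim=> [c|c1' c2' c3 Hm _ [D [HP Hperm]]].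
  by exists [::]; split; [exact: PR_nil | exact: perm_refl].
move: HP Hperm; case: Hm => [t u v x p q Hr _ _|x y p _ _] /= HP Hperm.
- exists (x ++ D); split; first exact: PR_cons Hr HP.
  rewrite -catA.
  apply: (@perm_trans _ (x ++ (t ++ u) ++ v)); first by rewrite perm_cat2l.
  by rewrite perm_catCA -!catA perm_refl.
- by exists D; split.
Qed.

Lemma accepts_D w : accepts A w ->
  exists D qf, final qf /\ PR (q0 A) D qf /\ perm_eq D w.
Proof.
move=> [qf [Hf Hm]]; have [D [HP Hperm]] := moves_D Hm.
by exists D, qf; split => //; split => //; move: Hperm; rewrite /= !cats0.
Qed.

Lemma accepts_PR D qf : final qf -> PR (q0 A) D qf -> accepts A D.
Proof.
move=> Hf HP; exists qf; split => //.
by have := PR_moves HP [::]; rewrite cats0.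
Qed.

Definition Kmax := \max_(r <- rules A) size r.1.2.

Lemma size_rule p (x : seq Sigma) q : (p, x, q) \in rules A -> size x <= Kmax.
Proof. move=> Hr; exact: (@leq_bigmax_seq _ _ xpredT (fun r => size r.1.2) _ Hr). Qed.

Lemma split_pref (x z Aw r : seq Sigma) : x ++ z = Aw ++ r -> size x <= size Aw ->
  exists Aw', Aw = x ++ Aw' /\ z = Aw' ++ r.
Proof.
elim: x Aw => [|c x IH] [|d Aw] //=.
- by move=> ->; exists [::].
- by move=> ->; exists (d :: Aw).
- move=> [-> H] Hs; have [Aw' [-> ->]] := IH _ H Hs; by exists Aw'.
Qed.

Lemma straddle p w q : PR p w q -> forall Aw r, w = Aw ++ r -> r != [::] ->
  exists A1 A2 s, Aw = A1 ++ A2 /\ size A2 < Kmax /\ PR p A1 s /\ PR s (A2 ++ r) q.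
Proof.
elim=> [p0|p0 x p' z q' Hr HP IH] Aw r Hw Hr0.
  have : size ([::] : seq Sigma) = size (Aw ++ r) by rewrite Hw.
  rewrite size_cat; move: Hr0; case: r {Hw} => //= c l _; lia.
case: (leqP (size x) (size Aw)) => Hs.
- have [Aw' [HA Hz]] := split_pref Hw Hs.
  have [A1 [A2 [s [H1 [H2 [H3 H4]]]]]] := IH _ _ Hz Hr0.
  exists (x ++ A1), A2, s; split; first by rewrite HA H1 catA.
  split => //; split => //; exact: PR_cons Hr H3.
- exists [::], Aw, p0; split => //; split.
    by apply: leq_trans Hs _; exact: size_rule Hr.
  split; first exact: PR_nil.
  rewrite -Hw; exact: PR_cons Hr HP.
Qed.

Lemma pump (a : Sigma) p w s : PR p w s -> all (pred1 a) w ->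
  (exists w', size w' < size w /\ all (pred1 a) w' /\ PR p w' s) \/
  (exists vs : seq (state A), uniq vs /\ size w <= Kmax * size vs /\
     forall v, v \in vs -> exists w', size w' <= size w /\ all (pred1 a) w' /\ PR v w' s).
Proof.
elim=> [p0|p0 x p' z q Hr HP IH] Hall.
  by right; exists [::]; split => //; split => //.
rewrite all_cat in Hall; case/andP: Hall => Hx Hz.
have Hx0 : 0 < size x by rewrite lt0n size_eq0; exact: rules_nonempty Hr.
have HxK := size_rule Hr.
case: (IH Hz) => [[w' [Hsz [Hw' HP']]]|[vs [Hu [Hsz Hvs]]]].
  left; exists (x ++ w'); rewrite !size_cat all_cat Hx Hw'; split; first by rewrite ltn_add2l.
  split => //; exact: PR_cons Hr HP'.
case: (boolP (p0 \in vs)) => Hin.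
  have [w' [H1 [H2 H3]]] := Hvs _ Hin.
  left; exists w'; rewrite !size_cat; split; first lia.
  by split.
right; exists (p0 :: vs); split; first by rewrite /= Hin Hu.
split; first by rewrite size_cat /= mulnS; lia.
move=> v; rewrite inE; case/orP => [/eqP ->|Hv].
  exists (x ++ z); split => //; rewrite all_cat Hx Hz; split => //.
  exact: PR_cons Hr HP.
have [w' [H1 [H2 H3]]] := Hvs _ Hv.
exists w'; rewrite !size_cat; split; first lia. by split.
Qed.

End Aux.

Lemma cnt (T : eqType) (c d : T) k : count (pred1 c) (nseq k d) = (d == c) * k.
Proof. by rewrite count_nseq. Qed.

Theorem lemma9 (Sigma : finType) (a b : Sigma) :
  a != b -> (forall x : Sigma, x = a \/ x = b) ->
  ~ exists A : GRLOWJFA Sigma,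
      forall w : seq Sigma,
        accepts A w <-> exists n : nat, w = nseq n a ++ nseq n b.
Proof.
move=> Hab _ [A HA].
have Hba : (b == a) = false by rewrite eq_sym (negbTE Hab).
pose K := Kmax A; pose m := #|state A|.
pose N := (K * m + K).+1.
have [D [qf [Hf [HP Hperm]]]] := accepts_D (proj2 (HA _) (ex_intro _ N erefl)).
have [n Hn] := proj1 (HA D) (accepts_PR Hf HP).
have HnN : n = N.
  move/permP: Hperm => Hc; have := Hc (pred1 b).
  by rewrite Hn !count_cat !cnt eqxx (negbTE Hab) !mul0n !mul1n !add0n.
subst n.
have [A1 [A2 [s [HA12 [HsA2 [HP1 HP2]]]]]] :=
  straddle HP Hn isT.
have Hall : all (pred1 a) (nseq N a ++ [::]) by rewrite cats0; apply/all_pred1P; rewrite size_nseq.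
have Hall' := Hall; rewrite cats0 HA12 all_cat in Hall'.
case/andP: Hall' => HA1 HA2.
have Hsz : size A1 + size A2 = N by rewrite -size_cat -HA12 size_nseq.
case: (pump HP1 HA1) => [[A1' [Hlt [HA1' HP1']]]|[vs [Hu [Hs _]]]]; last first.
  have : size vs <= m by rewrite -(card_uniqP Hu); exact: max_card.
  rewrite -/K in Hs HsA2 => Hvs.
  have : K * size vs <= K * m by rewrite leq_mul2l Hvs orbT.
  rewrite /N in Hsz; clear -Hs HsA2 Hsz; move=> H; clearbody K m; lia.
have Hacc := accepts_PR Hf (PR_cat HP1' HP2).
have [n' Hn'] := proj1 (HA _) Hacc.
move/all_pred1P: HA1' => E1; move/all_pred1P: HA2 => E2.
have Cb := congr1 (count (pred1 b)) Hn'.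
have Ca := congr1 (count (pred1 a)) Hn'.
rewrite E1 E2 !count_cat !cnt !eqxx (negbTE Hab) Hba !mul1n !mul0n in Ca Cb.
set k1 := size A1' in Ca Hlt; set k2 := size A2 in Ca Hsz; clearbody k1 k2 K m N; lia.
Qed.
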